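(* Let $\mathcal{T}$ be a tower with $\mathbb{K}_0=\emptyset$ whose maps are elementary inclusions or elementary contractions (named by the naming convention below), of dimension $\Delta$ and with $n$ elementary inclusions; let $\mathcal{W}$ be its contracting forest with node costs $c$. Then every ascending path in $\mathcal{W}$ with endpoint $x$ has cost at most $2\cdot|E(x)|$, and every independent set of ascending paths in $\mathcal{W}$ has cost at most $2\cdot(\Delta+1)\cdot n$.
   Context: Elementary inclusion: $\mathbb{K}_{i+1}=\mathbb{K}_i\cup\{\sigma\}$, $\sigma\notin\mathbb{K}_i$. Elementary contraction of distinct vertices $u,v$: for one of them, say $v$, the vertex set of $\mathbb{K}_{i+1}$ is that of $\mathbb{K}_i$ minus $v$, $\phi_i(u)=\phi_i(v)=u$, identity elsewhere, $\mathbb{K}_{i+1}=\phi_i(\mathbb{K}_i)$. Dimension = maximal simplex dimension. Active small coning construction: $\hat{\mathbb{K}}_0=\emptyset$; vertices flagged active/inactive, simplex active iff all its vertices are; $\mathrm{Act}\overline{\mathrm{St}}(w,\hat{\mathbb{K}}_i)$ = active simplices of $\hat{\mathbb{K}}_i$ in the closed star of $w$; inclusion adds $\sigma$ (new vertex active); contraction of $u,v$ with $|\mathrm{Act}\overline{\mathrm{St}}(u,\hat{\mathbb{K}}_i)|\le|\mathrm{Act}\overline{\mathrm{St}}(v,\hat{\mathbb{K}}_i)|$ sets $\hat{\mathbb{K}}_{i+1}=\hat{\mathbb{K}}_i\cup\{\{v\}\cup\tau:\tau\in\mathrm{Act}\overline{\mathrm{St}}(u,\hat{\mathbb{K}}_i)\}$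 and marks $u$ inactive (symmetric otherwise). Naming convention: each contraction maps $u,v$ to the vertex not marked inactive. Contracting forest $\mathcal{W}$: start empty; a vertex inclusion of $w$ adds a single-node tree labeled $w$; inclusions of higher simplices change nothing; a contraction of $u,v$ makes the current roots labeled $u,v$ children of a new root labeled with the image vertex. An internal node $x$ corresponding to contraction $\phi_i$ has cost $c(x)=|\hat{\mathbb{K}}_{i+1}\setminus\hat{\mathbb{K}}_i|$; leaves cost $0$. $\Sigma$: the $n$ simplices added at inclusions; each vertex of $\sigma\in\Sigma$ added by $\phi_i$ corresponds to the root of the forest after step $i$ labeled with it; $E(x)$ = those $\sigma\in\Sigma$ with a vertex whose node lies in the subtree rooted at $x$. An ascending path $(x_1,\dots,x_L)$, $L\ge1$, has $x_{k+1}$ the parent of $x_k$; $x_L$ is its endpoint; its cost is the sum of costs of its nodes. A set of ascending paths is independent if their endpoints are pairwise distinct and no endpoint is a proper ancestor of another; its cost is the sum of the path costs. *)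

(* Defs.v *)
From HB Require Import structures.
From mathcomp Require Import all_boot all_order.
From mathcomp Require Import finmap.
Set Implicit Arguments. Unset Strict Implicit. Unset Printing Implicit Defensive.
Local Open Scope fset_scope.

(* Vertices are natural numbers; a simplex is a nonempty finite set of
   vertices; a complex is a finite set of simplices. *)
Definition simplex := {fset nat}.
Definition cplx := {fset {fset nat}}.

Definition verts (K : cplx) : {fset nat} := fcover K.

(* Elementary operations of a tower.
   [Incl s] : elementary inclusion of the simplex s.
   [Contr u v] : elementary contraction of the (distinct) vertices u, v;
   which of u, v survives is decided by the active small coning
   construction (naming convention): if |ActSt(u)| <= |ActSt(v)| then u is
   marked inactive and u,v are mapped to v, otherwise v is marked inactive
   and u,v are mapped to u. *)
Inductive op := Incl of {fset nat} | Contr of nat & nat.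

Definition is_incl (o : op) : bool := if o is Incl _ then true else false.

(* state after a number of steps:
   K     : the complex K_i of the tower
   Kh    : the coning complex \hat K_i
   inact : the set of vertices flagged inactive
   roots : roots w = Some x iff the current root of the contracting forest
           labeled w is the node x (nodes are named by the index of the
           step that created them)
   par   : the parent function of the forest built so far *)
Record state := State {
  K : cplx; Kh : cplx; inact : {fset nat};
  roots : nat -> option nat; par : nat -> option nat }.

Definition state0 : state :=
  State fset0 fset0 fset0 (fun _ => None) (fun _ => None).

Definition active (I : {fset nat}) (t : {fset nat}) : bool := fdisjoint t I.

Definition ActSt (w : nat) (Kh : cplx) (I : {fset nat}) : cplx :=
  [fset t in Kh | (t `|` [fset w] \in Kh) && active I t].

Definition phi (d z : nat) (s : {fset nat}) : {fset nat} :=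
  [fset (if x == d then z else x) | x in s].

Definition dead (s : state) (u v : nat) : nat :=
  if #|` ActSt u (Kh s) (inact s)| <= #|` ActSt v (Kh s) (inact s)| then u else v.
Definition surv (s : state) (u v : nat) : nat :=
  if #|` ActSt u (Kh s) (inact s)| <= #|` ActSt v (Kh s) (inact s)| then v else u.

Definition step (i : nat) (o : op) (s : state) : state :=
  match o with
  | Incl sg =>
      let vx := #|` sg| == 1 in
      State (sg |` K s) (sg |` Kh s)
            (if vx then inact s `\` sg else inact s)
            (fun x => if vx && (x \in sg) then Some i else roots s x)
            (par s)
  | Contr u v =>
      let d := dead s u v in
      let z := surv s u v in
      State [fset phi d z t | t in K s]
            (Kh s `|` [fset (z |` t) | t in ActSt d (Kh s) (inact s)])
            (d |` inact s)
            (fun x => if x == d then None else if x == z then Some i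
                      else roots s x)
            (fun y => if (Some y == roots s d) || (Some y == roots s z)
                      then Some i else par s y)
  end.

Definition dflt_op : op := Incl fset0.

Fixpoint st_at (ops : seq op) (k : nat) : state :=
  match k with
  | 0 => state0
  | k'.+1 => step k' (nth dflt_op ops k') (st_at ops k')
  end.

Definition Kc (ops : seq op) (i : nat) : cplx := K (st_at ops i).

(* validity of a tower starting from K_0 = empty.  Vertex inclusions use
   fresh vertex names (never used before in the tower). *)
Definition valid_tower (ops : seq op) : Prop :=
  forall i, i < size ops ->
  match nth dflt_op ops i with
  | Incl sg =>
      [/\ sg != fset0, sg \notin Kc ops i,
          (forall t : {fset nat}, t != fset0 -> t `<` sg -> t \in Kc ops i) &
          (#|` sg| = 1 -> forall j, j <= i -> forall x, x \in sg ->
               x \notin verts (Kc ops j))]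
  | Contr u v => [/\ u != v, u \in verts (Kc ops i) & v \in verts (Kc ops i)]
  end.

Definition n_incl (ops : seq op) : nat := count is_incl ops.

Definition tower_dim (ops : seq op) : nat :=
  \max_(i < (size ops).+1) \max_(s <- Kc ops i) (#|` s| - 1).

Definition is_node (ops : seq op) (x : nat) : bool :=
  (x < size ops) &&
  match nth dflt_op ops x with
  | Incl sg => #|` sg| == 1
  | Contr _ _ => true
  end.

Definition parent (ops : seq op) (x : nat) : option nat :=
  par (st_at ops (size ops)) x.

Definition cost (ops : seq op) (x : nat) : nat :=
  match nth dflt_op ops x with
  | Contr _ _ => #|` Kh (st_at ops x.+1) `\` Kh (st_at ops x)|
  | Incl _ => 0
  end.

Fixpoint up (ops : seq op) (k : nat) (y : nat) : option nat :=
  match k with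
  | 0 => Some y
  | k'.+1 => obind (parent ops) (up ops k' y)
  end.

(* Since parents have strictly larger indices than their children and all
   nodes are < size ops, ancestors are reached in at most size ops steps. *)
Definition in_subtree (ops : seq op) (x y : nat) : bool :=
  [exists k : 'I_(size ops).+1, up ops k y == Some x].

Definition in_E (ops : seq op) (x i : nat) : bool :=
  match nth dflt_op ops i with
  | Incl sg => [exists w : sg, if roots (st_at ops i.+1) (val w) is Some y
                                then in_subtree ops x y else false]
  | Contr _ _ => false
  end.

Definition E (ops : seq op) (x : nat) : seq nat :=
  [seq i <- iota 0 (size ops) | in_E ops x i].

Definition ascending (ops : seq op) (p : seq nat) : bool :=
  (p != [::]) && all (is_node ops) p &&
  sorted (fun a b => parent ops a == Some b) p.

Definition endpoint (p : seq nat) : nat := last 0 p.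

Definition path_cost (ops : seq op) (p : seq nat) : nat :=
  \sum_(x <- p) cost ops x.

Definition independent (ops : seq op) (P : seq (seq nat)) : bool :=
  all (ascending ops) P && uniq (map endpoint P) &&
  all (fun p => all (fun q =>
         ~~ ((endpoint p != endpoint q) &&
             in_subtree ops (endpoint p) (endpoint q))) P) P.

Definition set_cost (ops : seq op) (P : seq (seq nat)) : nat :=
  \sum_(p <- P) path_cost ops p.

(* Main.v *)
Require Import Defs.
From mathcomp Require Import all_boot all_order.
From mathcomp Require Import finmap.
Import Defs.
Set Implicit Arguments. Unset Strict Implicit. Unset Printing Implicit Defensive.
Local Open Scope fset_scope.


Lemma vertsP (K0 : cplx) w : reflect (exists2 s, s \in K0 & w \in s) (w \in verts K0).
Proof.
apply: (iffP (@bigfcupP _ _ K0 w id xpredT)) => [[s /andP[sK _] ws]|[s sK ws]]; first by exists s.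
by exists s => //; rewrite sK.
Qed.

Lemma in_phi d z s x : d != z ->
  (x \in phi d z s) = (x != d) && ((x \in s) || ((x == z) && (d \in s))).
Proof.
move=> dz; apply/imfsetP/idP => /=.
  case=> y ys ->; case: ifP => [/eqP yd|yd].
    by rewrite eq_sym dz eqxx -yd ys orbT.
  by rewrite yd ys.
case/andP=> xd /orP[xs|/andP[/eqP -> ds]]; first by exists x => //; rewrite (negbTE xd).
by exists d => //; rewrite eqxx.
Qed.

Lemma phi_id d z s : d \notin s -> phi d z s = s.
Proof.
move=> ds; apply/fsetP=> x; apply/imfsetP/idP => /=.
  by case=> y ys ->; case: (y =P d) => [yd|//]; rewrite -yd ys in ds.
by move=> xs; exists x => //; case: (x =P d) => // xd; rewrite -xd xs in ds.
Qed.

Lemma phi_d d z s : d != z -> d \in s -> phi d z s = z |` (s `\ d).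
Proof.
move=> dz ds; apply/fsetP=> x; rewrite in_phi // in_fset1U in_fsetD1 ds andbT.
case: (x =P z) => [->|_]; first by rewrite eq_sym dz orbT.
by rewrite orbF.
Qed.


Definition sgof (o : op) : {fset nat} := if o is Incl s then s else fset0.
Definition stepmap (o : op) (s : state) (x : {fset nat}) :=
  match o with Contr u v => phi (dead s u v) (surv s u v) x | Incl _ => x end.
Fixpoint img (ops : seq op) (j t : nat) : {fset nat} :=
  match t with
  | 0 => sgof (nth dflt_op ops j)
  | t'.+1 => if t' <= j then sgof (nth dflt_op ops j)
             else stepmap (nth dflt_op ops t') (st_at ops t') (img ops j t')
  end.

Lemma img_step ops j t : j < t ->
  img ops j t.+1 = stepmap (nth dflt_op ops t) (st_at ops t) (img ops j t).
Proof. by move=> jt /=; rewrite leqNgt jt. Qed.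

Lemma img_self ops j : img ops j j.+1 = sgof (nth dflt_op ops j).
Proof. by rewrite /= leqnn. Qed.

Lemma dead_survP s u v :
  (dead s u v = u /\ surv s u v = v) \/ (dead s u v = v /\ surv s u v = u).
Proof. by rewrite /dead /surv; case: ifP; [left|right]. Qed.

Lemma dead_le s u v :
  #|` ActSt (dead s u v) (Kh s) (inact s)| <= #|` ActSt (surv s u v) (Kh s) (inact s)|.
Proof. by rewrite /dead /surv; case: ifP => // /negbT; rewrite -ltnNge => /ltnW. Qed.

Record tinv (ops : seq op) (t : nat) : Prop := Inv {
  i_ne : fset0 \notin K (st_at ops t);
  i_cl : forall s s', s \in K (st_at ops t) -> s' `<=` s -> s' != fset0 ->
           s' \in K (st_at ops t);
  i_act : forall s, (s \in Kh (st_at ops t)) && active (inact (st_at ops t)) s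
                    = (s \in K (st_at ops t));
  i_inact : forall w, w \in inact (st_at ops t) ->
              exists2 j, j <= t & w \in verts (Kc ops j);
  i_roots : forall w, (roots (st_at ops t) w != None) = (w \in verts (K (st_at ops t)));
  i_rlt : forall w y, roots (st_at ops t) w = Some y -> y < t;
  i_rinj : forall w w' y, roots (st_at ops t) w = Some y ->
             roots (st_at ops t) w' = Some y -> w = w';
  i_par : forall y p, par (st_at ops t) y = Some p ->
     [/\ y < p, p < t, (forall w, roots (st_at ops t) w != Some y) &
         exists u v, nth dflt_op ops p = Contr u v /\
           (roots (st_at ops p) u = Some y \/ roots (st_at ops p) v = Some y)];
  i_surj : forall s, s \in K (st_at ops t) ->
     exists2 j, j < t & is_incl (nth dflt_op ops j) && (img ops j t == s);
  i_img : forall j, j < t -> is_incl (nth dflt_op ops j) ->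
     img ops j t \in K (st_at ops t)
}.

Lemma inv0 ops : tinv ops 0.
Proof.
constructor => //=.
by move=> w; apply/esym/negbTE/vertsP => -[s]; rewrite in_fset0.
Qed.

Lemma single_verts (K0 : cplx) w s : s \in K0 -> w \in s -> w \in verts K0.
Proof. by move=> sK ws; apply/vertsP; exists s. Qed.

Lemma verts_U1 (K0 : cplx) s w : (w \in verts (s |` K0)) = (w \in s) || (w \in verts K0).
Proof.
apply/vertsP/orP => [[s' /fset1UP[->|s'K] ws']|[ws|/vertsP[s' s'K ws']]].
- by left.
- by right; apply/vertsP; exists s'.
- by exists s => //; rewrite fset1U1.
- by exists s' => //; rewrite fset1Ur.
Qed.


Lemma vert_single ops t w : tinv ops t -> w \in verts (K (st_at ops t)) ->
  [fset w] \in K (st_at ops t).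
Proof.
move=> I /vertsP[s sK ws]; apply: (i_cl I sK); last by apply/fset0Pn; exists w; rewrite inE.
by apply/fsubsetP=> x; rewrite inE => /eqP ->.
Qed.

Lemma vert_active ops t w : tinv ops t -> w \in verts (K (st_at ops t)) ->
  w \notin inact (st_at ops t).
Proof.
move=> I wv; have := i_act I [fset w]; rewrite (vert_single I wv).
by case/andP=> _; rewrite /active fdisjoint1X.
Qed.

Lemma inv_incl ops t sg : nth dflt_op ops t = Incl sg ->
  [/\ sg != fset0, sg \notin Kc ops t,
     (forall t0 : {fset nat}, t0 != fset0 -> t0 `<` sg -> t0 \in Kc ops t) &
     (#|` sg| = 1 -> forall j, j <= t -> forall x, x \in sg -> x \notin verts (Kc ops j))] ->
  tinv ops t -> tinv ops t.+1.
Proof.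
move=> Ho [sg0 sgK faces fresh] I.
have Hst : st_at ops t.+1 = step t (Incl sg) (st_at ops t) by rewrite /= Ho.
rewrite /Kc in sgK faces fresh.
set s := st_at ops t in Hst I sgK faces fresh *.
have freshI : #|` sg| = 1 -> forall x, x \in sg -> x \notin inact s.
  move=> h1 x xs; apply/negP => /(i_inact I) [j jt xj].
  by move: (fresh h1 j jt x xs); rewrite xj.
have nvx : #|` sg| != 1 -> forall w, w \in sg -> [fset w] \in K s.
  move=> h1 w ws; apply: faces; first by apply/fset0Pn; exists w; rewrite inE.
  rewrite fproperEneq; apply/andP; split.
    by apply: contra h1 => /eqP <-; rewrite cardfs1.
  by apply/fsubsetP=> x; rewrite inE => /eqP ->.
have sgact : active (inact s) sg.
  rewrite /active; apply/fdisjointP => w ws.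
  case: (boolP (#|` sg| == 1)) => [/eqP h1|h1]; first exact: freshI.
  have := i_act I [fset w]; rewrite nvx //.
  by case/andP=> _; rewrite /active fdisjoint1X.
have Ieq : (if #|` sg| == 1 then inact s `\` sg else inact s) = inact s.
  case: ifP => // /eqP h1; apply/fsetP=> x; rewrite in_fsetD.
  case: (boolP (x \in inact s)) => xI; rewrite ?andbT ?andbF //; apply/negP => xs; by move: (freshI h1 x xs); rewrite xI.
have rootsE : forall w, roots (st_at ops t.+1) w =
    if (#|` sg| == 1) && (w \in sg) then Some t else roots s w by move=> w; rewrite Hst.
constructor; rewrite ?Hst /= ?Ieq.
- by rewrite in_fset1U negb_or eq_sym sg0 (i_ne I).
- move=> s1 s' /fset1UP[->|s1K] sub s'0; last by rewrite fset1Ur // (i_cl I s1K).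
  case: (s' =P sg) => [->|ne]; first by rewrite fset1U1.
  by rewrite fset1Ur // faces // fproperEneq sub andbT; apply/eqP.
- move=> s1; rewrite !in_fset1U andb_orl.
  case: (s1 =P sg) => [->|_] /=; first by rewrite sgact.
  exact: (i_act I).
- move=> w /(i_inact I) [j jt wj]; exists j => //; exact: leqW.
- move=> w; rewrite verts_U1.
  case: (boolP (w \in sg)) => ws; last by rewrite andbF (i_roots I).
  case: (boolP (#|` sg| == 1)) => //= h1.
  by rewrite (i_roots I); apply/vertsP; exists [fset w]; rewrite ?nvx ?inE.
- move=> w y; case: ifP => [_ [<-]//|_ /(i_rlt I)]; exact: leqW.
- move=> w w' y; case: ifP => [/andP[/cardfs1P[x ->]]|_].
    rewrite inE => /eqP -> [<-]; case: ifP => [/andP[_]|_ /(i_rlt I)]; first by rewrite inE => /eqP ->.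
    by rewrite ltnn.
  case: ifP => [_ /(i_rlt I)|_]; first by move=> h [hy]; rewrite hy ltnn in h.
  exact: (i_rinj I).
- move=> y p /(i_par I) [yp pt nr ex]; split => //; first exact: leqW.
  move=> w; case: ifP => [_|_]; last exact: nr.
  by apply/eqP => -[ty]; move: (ltn_trans yp pt); rewrite ty ltnn.
- move=> s1 /fset1UP[->|/(i_surj I)[j jt /andP[ij /eqP ij']]].
    by exists t => //; rewrite leqnn Ho eqxx.
  by exists j; [exact: leqW| rewrite ij leqNgt jt Ho /= ij'].
- move=> j; rewrite ltnS leq_eqVlt => /orP[/eqP ->|jt] ij.
    by rewrite leqnn Ho fset1U1.
  by rewrite leqNgt jt Ho /= fset1Ur // (i_img I).
Qed.


Lemma verts_phi (K0: cplx) d z w : d != z -> z \in verts K0 ->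
  (w \in verts [fset phi d z x | x in K0]) = (w != d) && ((w == z) || (w \in verts K0)).
Proof.
move=> dz zK; apply/vertsP/andP.
  case=> s1 /imfsetP[x xK ->]; rewrite in_phi // => /andP[wd /orP[wx|/andP[wz _]]].
    by split => //; apply/orP; right; apply/vertsP; exists x.
  by rewrite wz.
case=> wd /orP[/eqP ->|/vertsP[x xK wx]].
  case/vertsP: zK => x xK zx; exists (phi d z x); first by apply/imfsetP; exists x.
  by rewrite in_phi // eqxx zx eq_sym dz.
by exists (phi d z x); [apply/imfsetP; exists x | rewrite in_phi // wd wx].
Qed.

Lemma ActSt_K ops t w x : tinv ops t -> w \in verts (K (st_at ops t)) ->
  (x \in ActSt w (Kh (st_at ops t)) (inact (st_at ops t))) =
  (x \in K (st_at ops t)) && (x `|` [fset w] \in K (st_at ops t)).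
Proof.
move=> I wv; rewrite /ActSt !inE -!(i_act I) /active fdisjointUX fdisjoint1X.
rewrite (vert_active I wv) andbT.
by case: (x \in Kh _); case: (x `|` _ \in Kh _); case: fdisjoint.
Qed.

Lemma fdisj1U (A B : {fset nat}) d : fdisjoint A (d |` B) = (d \notin A) && fdisjoint A B.
Proof. by rewrite fdisjoint_sym fdisjointUX fdisjoint1X fdisjoint_sym. Qed.

Lemma inv_contr ops t u v : nth dflt_op ops t = Contr u v ->
  [/\ u != v, u \in verts (Kc ops t) & v \in verts (Kc ops t)] ->
  tinv ops t -> tinv ops t.+1.
Proof.
move=> Ho [uv uK vK] I.
have Hst : st_at ops t.+1 = step t (Contr u v) (st_at ops t) by rewrite /= Ho.
rewrite /Kc in uK vK.
set s := st_at ops t in Hst I uK vK *.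
set d := dead s u v; set z := surv s u v.
have dzuv : (d = u /\ z = v) \/ (d = v /\ z = u) by exact: dead_survP.
have [dK zK dz] : [/\ d \in verts (K s), z \in verts (K s) & d != z].
  by case: dzuv => -[-> ->]; split => //; rewrite eq_sym.
set f := fun y => if y == d then z else y.
constructor; rewrite ?Hst /= -/d -/z.
- apply/negP => /imfsetP[x xK /esym x0].
  have : x != fset0 by apply: contraNneq (i_ne I) => <-.
  case/fset0Pn => y yx; have : f y \in phi d z x by apply/imfsetP; exists y.
  by rewrite x0 in_fset0.
- move=> s1 s' /imfsetP[x xK ->] sub s'0.
  set s'' := [fset y in x | f y \in s'].
  have e : phi d z s'' = s'.
    apply/fsetP => y'; apply/imfsetP/idP => [[y]|ys'].
      by rewrite !inE => /andP[_ fy] ->.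
    have : y' \in phi d z x by apply: (fsubsetP sub).
    case/imfsetP => y yx eq; exists y => //; rewrite !inE yx /=.
    by rewrite /f -eq.
  apply/imfsetP; exists s'' => //; apply: (i_cl I xK); first exact: fset_sub.
  case/fset0Pn: s'0 => y' ys'; have : y' \in phi d z x by apply: (fsubsetP sub).
  case/imfsetP => y yx eq; apply/fset0Pn; exists y; rewrite !inE yx /=.
  by rewrite /f -eq.
- move=> s1; rewrite /active fdisj1U.
  apply/idP/idP.
    case/andP=> /fsetUP[s1Kh|/imfsetP[x xA ->]] /andP[ds1 act].
      apply/imfsetP; exists s1; last by rewrite phi_id.
      by rewrite -(i_act I) s1Kh.
    move: xA; rewrite (ActSt_K _ I dK) => /andP[xK xdK].
    have dx : d \notin x by apply: contra ds1; rewrite in_fset1U => ->; rewrite orbT.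
    apply/imfsetP; exists (x `|` [fset d]) => //.
    rewrite phi_d ?inE ?eqxx ?orbT //; congr (_ |` _).
    apply/fsetP => y; rewrite !inE; case: (y =P d) => [->|]; first by rewrite (negbTE dx).
    by rewrite orbF.
  case/imfsetP => x xK ->.
  have nd : d \notin phi d z x by rewrite in_phi // eqxx.
  have act : fdisjoint (phi d z x) (inact s).
    apply/fdisjointP => y; rewrite in_phi // => /andP[yd /orP[yx|/andP[/eqP -> _]]].
      by apply: (vert_active I); apply/vertsP; exists x.
    exact: (vert_active I).
  rewrite nd act andbT; case: (boolP (d \in x)) => dx; last first.
    by rewrite phi_id // in_fsetU; move: xK; rewrite -(i_act I) => /andP[-> _].
  rewrite phi_d //; case: (x `\ d =P fset0) => [->|ne].
    rewrite fsetU0 in_fsetU; have := vert_single I zK.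
    by rewrite -(i_act I) => /andP[-> _].
  rewrite andbT in_fsetU; apply/orP; right; apply/imfsetP; exists (x `\ d) => //.
  have xdK : x `\ d \in K s by apply: (i_cl I xK); [exact: fsubsetDl | apply/eqP].
  by rewrite (ActSt_K _ I dK) xdK /= fsetUC fsetD1K.
- move=> w; rewrite in_fset1U => /orP[/eqP ->|/(i_inact I)[j jt wj]].
    by exists t.
  by exists j => //; apply: leqW.
- move=> w; rewrite verts_phi //; case: (w =P d) => [->|wd] //=.
  by case: (w =P z) => //= _; rewrite (i_roots I).
- move=> w y; case: ifP => // _; case: ifP => [_ [<-] //|_ /(i_rlt I)]; exact: leqW.
- move=> w w' y; case: (w =P d) => // wd; case: (w =P z) => [-> [<-]|wz].
    case: (w' =P d) => // _; case: (w' =P z) => // _ /(i_rlt I); by rewrite ltnn.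
  case: (w' =P d) => // _; case: (w' =P z) => [_ /(i_rlt I) h [hy]|_]; first by rewrite hy ltnn in h.
  exact: (i_rinj I).
- move=> y p; case: ifP => [hy [<-]|_ /(i_par I) [yp pt nr ex]].
    have [yt rd] : y < t /\ (roots s d = Some y \/ roots s z = Some y).
      by case/orP: hy => /eqP h; split; try (by left); try (by right); apply: (i_rlt I (esym h)).
    split => //.
    + move=> w; case: (w =P d) => // wd; case: (w =P z) => [_|wz].
        by apply/eqP => -[ty]; rewrite ty ltnn in yt.
      apply/eqP => rw; case: rd => rd.
        by apply: wd; apply: (i_rinj I rw rd).
      by apply: wz; apply: (i_rinj I rw rd).
    + exists u, v; split => //; case: dzuv => -[de ze]; rewrite -/s -de -ze; case: rd; auto.
  split => //; first exact: leqW.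
  move=> w; case: (w =P d) => // _; case: (w =P z) => _; last exact: nr.
  by apply/eqP => -[ty]; move: (ltn_trans yp pt); rewrite ty ltnn.
- move=> s1 /imfsetP[x /(i_surj I)[j jt /andP[ij /eqP ij']] ->].
  by exists j; [exact: leqW| rewrite ij leqNgt jt Ho /= ij'].
- move=> j; rewrite ltnS leq_eqVlt => /orP[/eqP ->|jt] ij; first by rewrite Ho in ij.
  by rewrite leqNgt jt Ho /=; apply/imfsetP; exists (img ops j t) => //; apply: (i_img I).
Qed.


Definition AS (K0 : cplx) w : cplx := [fset t in K0 | t `|` [fset w] \in K0].
Definition Xc (K0 : cplx) w w' := #|` [fset t in AS K0 w | w' \notin t]|.
Definition Ac (K0 : cplx) w w' := #|` [fset s in K0 | (w \in s) && (w' \notin s)]|.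

Lemma card_split (A : {fset {fset nat}}) (P : pred {fset nat}) :
  (#|` A| = #|` [fset x in A | P x]| + #|` [fset x in A | ~~ P x]|)%N.
Proof.
rewrite -(cardfsID [fset x in A | P x] A); congr addn; congr (#|` _|).
  by apply/fsetP => x; rewrite !inE; case: (x \in A).
by apply/fsetP => x; rewrite !inE; case: (x \in A); case: (P x).
Qed.

Lemma cardU_le (A B : {fset {fset nat}}) : (#|` A `|` B| <= #|` A| + #|` B|)%N.
Proof. by rewrite -cardfsUI leq_addr. Qed.

Lemma Xc_le (K0 : cplx) w w' : w != w' -> (Xc K0 w w' <= 2 * Ac K0 w w')%N.
Proof.
move=> ww'; rewrite /Xc mul2n -addnn.
set A := [fset s in K0 | (w \in s) && (w' \notin s)].
apply: leq_trans (_ : (#|` A `|` [fset s `\ w | s in A]| <= _)%N); last first.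
  by apply: leq_trans (cardU_le _ _) _; rewrite leq_add2l; apply: leq_imfset_card.
apply: fsubset_leq_card; apply/fsubsetP => t; rewrite !inE => /andP[/andP[tK twK] w't].
case: (boolP (w \in t)) => wt.
  by rewrite tK w't.
apply/orP; right; apply/imfsetP; exists (t `|` [fset w]).
  by rewrite !inE twK eqxx orbT (negbTE w't) eq_sym (negbTE ww').
apply/fsetP => y; rewrite !inE; case: (y =P w) => [->|_] /=; first by rewrite (negbTE wt).
by rewrite orbF.
Qed.

Definition closedK (K0 : cplx) := forall s s', s \in K0 -> s' `<=` s -> s' != fset0 -> s' \in K0.

Lemma Y_le (K0 : cplx) d z : closedK K0 -> d != z ->
  (#|` [fset t in AS K0 z | d \in t]| <= #|` [fset t in AS K0 d | z \in t]|)%N.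
Proof.
move=> cl dz.
set f := fun t : {fset nat} => if z \in t then t else z |` (t `\ d).
set D := [fset t in AS K0 z | d \in t].
have inD : forall t, t \in D -> [/\ t \in K0, t `|` [fset z] \in K0 & d \in t].
  by move=> t; rewrite !inE => /andP[/andP[-> ->] ->].
have <- : #|` [fset f t | t in D]| = #|` D|.
  rewrite card_in_imfset //= => t1 t2 /inD[_ _ d1] /inD[_ _ d2]; rewrite /f.
  case: (boolP (z \in t1)) => z1; case: (boolP (z \in t2)) => z2 //.
  - move=> e; move: d1; rewrite e !inE eqxx /= orbF.
    by case: (d =P z) => // h; rewrite h eqxx in dz.
  - move=> e; move: d2; rewrite -e !inE eqxx /= orbF.
    by case: (d =P z) => // h; rewrite h eqxx in dz.
  - move=> e; apply/fsetP => y.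
    have key : forall t, z \notin t -> d \in t -> (y \in t) = (y == d) || ((y != z) && (y \in z |` (t `\ d))).
      move=> t zt dt; rewrite !inE; case: (y =P d) => [->|yd] //=.
      case: (y =P z) => [->|_] //=; by rewrite (negbTE zt).
    by rewrite (key _ z1 d1) (key _ z2 d2) e.
apply: fsubset_leq_card; apply/fsubsetP => t' /imfsetP[t /inD[tK tzK dt] ->].
rewrite /f; case: (boolP (z \in t)) => zt.
  rewrite !inE zt andbT tK /=.
  by have -> : t `|` [fset d] = t by apply/fsetP => y; rewrite !inE; case: (y =P d) => [->|]; rewrite ?dt ?orbF.
have e1 : z |` (t `\ d) `|` [fset d] = t `|` [fset z].
  apply/fsetP => y; rewrite !inE; case: (y =P d) => [->|] /=; first by rewrite dt orbT.
  by rewrite orbF orbC.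
rewrite !inE e1 tzK eqxx andbT /= andbT; apply: (cl _ _ tzK).
  apply/fsubsetP => y; rewrite !inE; case: (y =P z) => _; rewrite ?orbT ?orbF //; by case/andP.
by apply/fset0Pn; exists z; rewrite !inE eqxx.
Qed.

Lemma Xc_mono (K0 : cplx) d z : closedK K0 -> d != z ->
  (#|` AS K0 d| <= #|` AS K0 z|)%N -> (Xc K0 d z <= Xc K0 z d)%N.
Proof.
move=> cl dz h; have := Y_le cl dz.
rewrite /Xc (card_split (AS K0 d) (fun t => z \in t)) (card_split (AS K0 z) (fun t => d \in t)) in h.
move=> hy; rewrite -(leq_add2l #|` [fset t in AS K0 d | z \in t]|).
apply: leq_trans h _; rewrite leq_add2r //.
Qed.


Lemma tinv_all ops : valid_tower ops -> forall t, t <= size ops -> tinv ops t.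
Proof.
move=> V; elim=> [|t IH] ht; first exact: inv0.
have tl : t < size ops by [].
have := V t tl; case Ho: (nth dflt_op ops t) => [sg|u v] h.
  by apply: (inv_incl Ho h); apply: IH; apply: ltnW.
by apply: (inv_contr Ho h); apply: IH; apply: ltnW.
Qed.

Lemma par_persist ops t y p : valid_tower ops -> t <= size ops ->
  par (st_at ops t) y = Some p -> parent ops y = Some p.
Proof.
move=> V tn h.
have H : forall n, n + t <= size ops -> par (st_at ops (n + t)) y = Some p.
  elim=> [|n IH] hn; first by rewrite add0n.
  have hn' : n + t <= size ops by apply: ltnW.
  rewrite addSn /=; case: (nth dflt_op ops (n + t)) => [sg|u v] /=; first by apply: IH.
  have e := IH hn'.
  have [_ _ nr _] := i_par (tinv_all V hn') e.
  by rewrite e !(eq_sym (Some y)) (negbTE (nr _)) (negbTE (nr _)).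
by rewrite /parent -(subnK tn); apply: H; rewrite subnK.
Qed.

Lemma parent_inv ops y p : valid_tower ops -> parent ops y = Some p ->
  [/\ y < p, p < size ops & exists u v, nth dflt_op ops p = Contr u v /\
     (roots (st_at ops p) u = Some y \/ roots (st_at ops p) v = Some y)].
Proof.
move=> V h; have [yp pn _ ex] := i_par (tinv_all V (leqnn _)) h; by split.
Qed.

Lemma contr_parent ops p u v y : valid_tower ops -> p < size ops ->
  nth dflt_op ops p = Contr u v ->
  (roots (st_at ops p) u = Some y \/ roots (st_at ops p) v = Some y) ->
  parent ops y = Some p.
Proof.
move=> V pn Ho h; apply: (par_persist (t := p.+1)) => //=; rewrite Ho /=.
by case: (dead_survP (st_at ops p) u v) => -[-> ->]; case: h => ->; rewrite eqxx ?orbT.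
Qed.

Inductive anc (ops : seq op) (x : nat) : nat -> Prop :=
| anc_refl : anc ops x x
| anc_up y p : parent ops y = Some p -> anc ops x p -> anc ops x y.

Lemma anc_trans ops x m y : anc ops x m -> anc ops m y -> anc ops x y.
Proof. by move=> h1; elim=> // y0 p e _ IH; apply: anc_up e IH. Qed.

Lemma anc_par ops y p : parent ops y = Some p -> anc ops p y.
Proof. by move=> e; apply: anc_up e (anc_refl _ _). Qed.

Lemma upS ops k y : up ops k.+1 y = obind (up ops k) (parent ops y).
Proof.
elim: k y => [|k IH] y /=; first by case: (parent ops y).
by rewrite -/(up ops k.+1 y) IH; case: (parent ops y).
Qed.

Lemma anc_up_ex ops x y : valid_tower ops -> anc ops x y ->
  exists k, up ops k y = Some x /\ k + y <= x.
Proof.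
move=> V; elim=> [|y' p e _ [k [hk hl]]]; first by exists 0; split => //.
exists k.+1; rewrite upS e /= hk; split => //.
have [yp _ _] := parent_inv V e.
by apply: leq_trans hl; rewrite addSnnS leq_add2l.
Qed.

Lemma anc_subtree ops x y : valid_tower ops -> x < size ops -> anc ops x y ->
  in_subtree ops x y.
Proof.
move=> V xn /(anc_up_ex V) [k [hk hl]]; apply/existsP.
have kl : k < (size ops).+1 by rewrite ltnS; apply: leq_trans (leq_addr y k) (leq_trans hl (ltnW xn)).
by exists (Ordinal kl); rewrite /= hk.
Qed.

Lemma subtree_anc ops x y : in_subtree ops x y -> anc ops x y.
Proof.
case/existsP => -[k _] /= /eqP; elim: k x => [|k IH] x /=; first by case=> ->; apply: anc_refl.
case e: (up ops k y) => [m|] //= pm.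
by apply: anc_trans (anc_par pm) (IH _ e).
Qed.

Lemma img_verts ops j t w : valid_tower ops -> j < t -> t <= size ops ->
  is_incl (nth dflt_op ops j) -> w \in img ops j t -> w \in verts (K (st_at ops t)).
Proof.
move=> V jt tn ij wi; apply/vertsP; exists (img ops j t) => //.
exact: (i_img (tinv_all V tn)).
Qed.

Lemma fresh_vert ops t sg w : valid_tower ops -> t < size ops ->
  nth dflt_op ops t = Incl sg -> #|` sg| == 1 -> w \in verts (K (st_at ops t)) -> w \notin sg.
Proof.
move=> V tn Ho /eqP h1 wv; have := V t tn; rewrite Ho => -[_ _ _ fr].
by apply/negP => ws; move: (fr h1 t (leqnn t) w ws); rewrite /Kc wv.
Qed.

Lemma uv_of_dz (s : state) u v w (P : nat -> Prop) :
  (w == dead s u v) || (w == surv s u v) -> P u -> P v -> P w.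
Proof. by case: (dead_survP s u v) => -[-> ->] /orP[] /eqP ->. Qed.

Lemma prop ops j t p w y : valid_tower ops -> j < t -> t <= p -> p <= size ops ->
  is_incl (nth dflt_op ops j) -> roots (st_at ops t) w = Some y -> w \in img ops j t ->
  parent ops y = Some p -> roots (st_at ops p) w = Some y /\ w \in img ops j p.
Proof.
move=> V jt tp pn ij rw wi py.
have H : forall n, t + n <= p -> roots (st_at ops (t + n)) w = Some y /\ w \in img ops j (t + n).
  elim=> [|n IH] hn; first by rewrite addn0.
  have hn' : t + n < p by rewrite -addnS.
  have [r1 i1] := IH (ltnW hn').
  have tn : t + n < size ops by apply: leq_trans hn' pn.
  have jt' : j < t + n by apply: leq_trans jt (leq_addr _ _).
  have wv := img_verts V jt' (ltnW tn) ij i1.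
  rewrite addnS img_step // /=.
  case Ho: (nth dflt_op ops (t + n)) => [sg|u v] /=.
    case: ifP => [/andP[h1 ws]|_] //.
    by move: (fresh_vert V tn Ho h1 wv); rewrite ws.
  set s := st_at ops (t + n).
  case: (boolP ((w == dead s u v) || (w == surv s u v))) => hw.
    have : roots s u = Some y \/ roots s v = Some y.
      have := uv_of_dz (P := fun x => roots s x = Some y -> roots s u = Some y \/ roots s v = Some y) hw.
      by apply => [h|h|]; [left|right|exact: r1].
    move/(contr_parent V tn Ho); rewrite py => -[e].
    by rewrite e ltnn in hn'.
  move: hw; rewrite negb_or => /andP[wd wz]; rewrite (negbTE wd) (negbTE wz); split => //.
  have dz : dead s u v != surv s u v.
    have := V _ tn; rewrite Ho => -[uv _ _].
    by case: (dead_survP s u v) => -[-> ->] //; rewrite eq_sym.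
  by rewrite in_phi // i1 wd.
by have := H (p - t); rewrite subnKC //; apply.
Qed.

Lemma roots_some ops t w : valid_tower ops -> t <= size ops ->
  w \in verts (K (st_at ops t)) -> exists y, roots (st_at ops t) w = Some y.
Proof.
move=> V tn wv; have := i_roots (tinv_all V tn) w; rewrite wv.
by case: (roots _ w) => // y _; exists y.
Qed.

Lemma dz_neq ops t u v : valid_tower ops -> t < size ops -> nth dflt_op ops t = Contr u v ->
  dead (st_at ops t) u v != surv (st_at ops t) u v.
Proof.
move=> V tn Ho; have := V _ tn; rewrite Ho => -[uv _ _].
by case: (dead_survP (st_at ops t) u v) => -[-> ->] //; rewrite eq_sym.
Qed.

Definition backP ops j y := exists2 w0, w0 \in sgof (nth dflt_op ops j) &
    exists y0, roots (st_at ops j.+1) w0 = Some y0 /\ anc ops y y0.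
Arguments backP : simpl never.

Lemma back ops j t w y : valid_tower ops -> j < t -> t <= size ops ->
  is_incl (nth dflt_op ops j) -> w \in img ops j t -> roots (st_at ops t) w = Some y ->
  backP ops j y.
Proof.
move=> V; elim: t w y => [|t IH] w y // jt tn ij.
case: (j =P t) => [<-|jt'].
  by rewrite img_self => wi rw; rewrite /backP; exists w => //; exists y; split => //; apply: anc_refl.
have jt1 : j < t by rewrite ltn_neqAle (introN eqP jt') -ltnS jt.
have tl : t < size ops by [].
rewrite img_step // /=.
case Ho: (nth dflt_op ops t) => [sg|u v] /= wi.
  have wv := img_verts V jt1 (ltnW tl) ij wi.
  case: ifP => [/andP[h1 ws]|_]; first by move: (fresh_vert V tl Ho h1 wv); rewrite ws.
  exact: (IH w y jt1 (ltnW tl) ij wi).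
set s := st_at ops t in wi *.
have dz := dz_neq V tl Ho; rewrite -/s in dz.
move: wi; rewrite in_phi // => /andP[wd hw].
rewrite (negbTE wd); case: (w =P surv s u v) => [wz|wz]; last first.
  by case/orP: hw => [wi|/andP[/eqP //]]; apply: (IH w y jt1 (ltnW tl) ij wi).
case=> <-.
have [w1 [w1i w1dz]] : exists w1, w1 \in img ops j t /\ ((w1 == dead s u v) || (w1 == surv s u v)).
  case/orP: hw => [wi|/andP[_ di]]; first by exists w; rewrite wi wz eqxx orbT.
  by exists (dead s u v); rewrite di eqxx.
have [y1 r1] := roots_some V (ltnW tl) (img_verts V jt1 (ltnW tl) ij w1i).
have [w0 w0s [y0 [r0 a0]]] := IH w1 y1 jt1 (ltnW tl) ij w1i r1.
exists w0 => //; exists y0; split => //.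
have : roots s u = Some y1 \/ roots s v = Some y1.
  have := uv_of_dz (P := fun x => roots s x = Some y1 -> roots s u = Some y1 \/ roots s v = Some y1) w1dz.
  by apply => [h|h|]; [left|right|exact: r1].
move/(contr_parent V tl Ho) => py1.
exact: anc_trans (anc_par py1) a0.
Qed.


Lemma ActSt_AS ops t w : tinv ops t -> w \in verts (K (st_at ops t)) ->
  ActSt w (Kh (st_at ops t)) (inact (st_at ops t)) = AS (K (st_at ops t)) w.
Proof. by move=> I wv; apply/fsetP => x; rewrite (ActSt_K _ I wv) /AS !inE. Qed.

Lemma cost_le ops i u v : valid_tower ops -> i < size ops -> nth dflt_op ops i = Contr u v ->
  (cost ops i <= 2 * Ac (K (st_at ops i)) u v)%N /\ (cost ops i <= 2 * Ac (K (st_at ops i)) v u)%N.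
Proof.
move=> V iN Ho; have I := tinv_all V (ltnW iN).
have := V _ iN; rewrite Ho => -[uv uK vK]; rewrite /Kc in uK vK.
have dz := dz_neq V iN Ho.
rewrite /cost Ho /= Ho /= -/(st_at ops i).
set s := st_at ops i in I uK vK dz *.
set d := dead s u v in dz *; set z := surv s u v in dz *.
have dzuv : (d = u /\ z = v) \/ (d = v /\ z = u) by exact: dead_survP.
have [dK zK] : d \in verts (K s) /\ z \in verts (K s) by case: dzuv => -[-> ->].
have cl : closedK (K s) by move=> ? ?; apply: (i_cl I).
have h1 : (#|` (Kh s `|` [fset z |` t | t in ActSt d (Kh s) (inact s)]) `\` Kh s| <= Xc (K s) d z)%N.
  apply: (@leq_trans #|` [fset z |` t | t in [fset t in AS (K s) d | z \notin t]]|); last first.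
    by apply: leq_imfset_card.
  apply: fsubset_leq_card.
  apply/fsubsetP => x; rewrite in_fsetD => /andP[xKh /fsetUP[xKh'|]]; first by rewrite xKh' in xKh.
  case/imfsetP => t tA xe; rewrite xe; rewrite (ActSt_AS I dK) /AS !inE in tA; case/andP: tA => tK tdK.
  apply/imfsetP; exists t => //; rewrite !inE tK tdK /=.
  apply/negP => zt; have e : z |` t = t.
    by apply/fsetP => y; rewrite !inE; case: (y =P z) => [->|] //=; rewrite zt.
  move: xKh; rewrite /= xe e.
  by move: (i_act I t); rewrite tK => /andP[->].
have h2 : (Xc (K s) d z <= Xc (K s) z d)%N.
  apply: Xc_mono => //; rewrite -(ActSt_AS I dK) -(ActSt_AS I zK); exact: dead_le.
have h3 := Xc_le (K s) dz; have h4 : z != d by rewrite eq_sym.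
have h5 := Xc_le (K s) h4.
case: dzuv => -[de ze]; rewrite -de -ze; split; apply: leq_trans h1 _ => //;
  by apply: leq_trans h2 _.
Qed.


Definition Jset ops t a b : {fset nat} :=
  [fset j in iota 0 t | is_incl (nth dflt_op ops j) && (a \in img ops j t) && (b \notin img ops j t)].

Lemma in_Jset ops t a b j : (j \in Jset ops t a b) =
  [&& j < t, is_incl (nth dflt_op ops j), a \in img ops j t & b \notin img ops j t].
Proof. by rewrite /Jset !inE mem_iota add0n /= -!andbA. Qed.

Lemma Ac_J ops t a b : valid_tower ops -> t <= size ops ->
  (Ac (K (st_at ops t)) a b <= #|` Jset ops t a b|)%N.
Proof.
move=> V tn; rewrite /Ac.
apply: (@leq_trans #|` [fset img ops j t | j in Jset ops t a b]|); last exact: leq_imfset_card.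
apply: fsubset_leq_card; apply/fsubsetP => s; rewrite !inE => /andP[sK /andP[hs bs]].
have [j jt /andP[ij /eqP e]] := i_surj (tinv_all V tn) sK.
by apply/imfsetP; exists j => //; rewrite in_Jset jt ij e hs bs.
Qed.

Definition good ops x (U : {fset nat}) := forall j, j \in U ->
  [/\ j < x, is_incl (nth dflt_op ops j), backP ops j x &
      exists w, roots (st_at ops x.+1) w = Some x /\ w \in img ops j x.+1].

Lemma backP_anc ops j x y : anc ops x y -> backP ops j y -> backP ops j x.
Proof. by move=> a [w0 w0s [y0 [r0 a0]]]; exists w0 => //; exists y0; split => //; apply: anc_trans a a0. Qed.

Lemma contr_label ops x u v a j : valid_tower ops -> x < size ops ->
  nth dflt_op ops x = Contr u v -> (a == u) || (a == v) -> j < x ->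
  a \in img ops j x ->
  exists w, roots (st_at ops x.+1) w = Some x /\ w \in img ops j x.+1.
Proof.
move=> V xn Ho hu jx ai; have dz := dz_neq V xn Ho.
set st := st_at ops x in dz *.
have zd : (surv st u v == dead st u v) = false by apply/negbTE; rewrite eq_sym.
exists (surv st u v); rewrite img_step // /= Ho /= zd eqxx; split => //.
rewrite in_phi // eq_sym dz /= eqxx /=.
case: (dead_survP st u v) => -[de ze]; rewrite de ze;
  by case/orP: hu => /eqP e; rewrite -e ai ?orbT.
Qed.

Lemma step_good ops x u v a b y U : valid_tower ops -> x < size ops ->
  nth dflt_op ops x = Contr u v -> ((a == u) && (b == v)) || ((a == v) && (b == u)) ->
  roots (st_at ops x) a = Some y -> parent ops y = Some x -> good ops y U ->
  [/\ (cost ops x <= 2 * #|` Jset ops x b a|)%N,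
      #|` U `|` Jset ops x b a| = (#|` U| + #|` Jset ops x b a|)%N &
      good ops x (U `|` Jset ops x b a)].
Proof.
move=> V xn Ho hab ra py gU.
have [yx _ _] := parent_inv V py.
have [c1 c2] := cost_le V xn Ho.
have hb : (b == u) || (b == v) by case/orP: hab => /andP[_ ->]; rewrite ?orbT.
have ha : (a == u) || (a == v) by case/orP: hab => /andP[-> _]; rewrite ?orbT.
have aU : forall j, j \in U -> a \in img ops j x.
  move=> j /gU [jy ij _ [w [rw wi]]].
  have [rw' wi'] := prop V (ltnW jy : j < y.+1) yx (ltnW xn) ij rw wi py.
  by rewrite -(i_rinj (tinv_all V (ltnW xn)) rw' ra).
split.
- apply: (leq_trans _ (leq_mul (leqnn 2) (@Ac_J ops x b a V (ltnW xn)))).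
  by case/orP: hab => /andP[/eqP -> /eqP ->].
- have e0 : U `&` Jset ops x b a = fset0; last by rewrite -cardfsUI e0 cardfs0 addn0.
  apply/fsetP => j; rewrite in_fsetI in_fset0 in_Jset; apply/negP => /andP[/aU ai /and4P[_ _ _]].
  by rewrite ai.
move=> j /fsetUP[jU|jJ].
  have [jy ij bj _] := gU j jU; split => //.
  - exact: ltn_trans jy yx.
  - exact: backP_anc (anc_par py) bj.
  - exact: contr_label V xn Ho ha (ltn_trans jy yx) (aU j jU).
move: jJ; rewrite in_Jset => /and4P[jx ij bi _]; split => //.
- have bv := img_verts V jx (ltnW xn) ij bi.
  have [r rb] := roots_some V (ltnW xn) bv.
  have pr : parent ops r = Some x.
    by apply: (contr_parent V xn Ho); case/orP: hb => /eqP e; rewrite -e; [left|right].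
  exact: backP_anc (anc_par pr) (back V jx (ltnW xn) ij bi rb).
- exact: contr_label V xn Ho hb jx bi.
Qed.

Lemma node_good ops x : valid_tower ops -> is_node ops x ->
  exists U, (cost ops x <= 2 * #|` U|)%N /\ good ops x U.
Proof.
move=> V /andP[xn _].
case Ho: (nth dflt_op ops x) => [sg|u v].
  by exists fset0; rewrite /cost Ho; split => // j; rewrite in_fset0.
have := V _ xn; rewrite Ho => -[uv uK vK].
exists (Jset ops x u v); split.
  have [c2 _] := cost_le V xn Ho.
  exact: leq_trans c2 (leq_mul (leqnn 2) (@Ac_J ops x u v V (ltnW xn))).
move=> j; rewrite in_Jset => /and4P[jx ij ui _]; split => //.
- have [r ru] := roots_some V (ltnW xn) uK.
  have pr : parent ops r = Some x by apply: (contr_parent V xn Ho); left.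
  exact: backP_anc (anc_par pr) (back V jx (ltnW xn) ij ui ru).
- by apply: (contr_label V xn Ho _ jx ui); rewrite eqxx.
Qed.

Lemma path_good ops p : valid_tower ops -> p != [::] -> all (is_node ops) p ->
  sorted (fun a b => parent ops a == Some b) p ->
  exists U, (path_cost ops p <= 2 * #|` U|)%N /\ good ops (last 0 p) U.
Proof.
move=> V; elim/last_ind: p => [//|q x IH] _.
rewrite all_rcons => /andP[xnode qnode].
case: q IH qnode => [|y0 q'] IH qnode.
  move=> _; have [U [c g]] := node_good V xnode; exists U.
  by rewrite /path_cost /= big_cons big_nil addn0.
set q := y0 :: q'.
rewrite /= rcons_path => /andP[qs /eqP py].
have [U [c g]] := IH isT qnode qs.
rewrite -/q /= in py; set y := last y0 q' in py g.
have [yx xn [u [v [Ho hr]]]] := parent_inv V py.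
have gen : forall a b, ((a == u) && (b == v)) || ((a == v) && (b == u)) ->
    roots (st_at ops x) a = Some y ->
    exists U, (path_cost ops (rcons q x) <= 2 * #|` U|)%N /\ good ops (last 0 (rcons q x)) U.
  move=> a b hab ra; have [c1 e g1] := step_good V xn Ho hab ra py g.
  exists (U `|` Jset ops x b a); split; last by rewrite last_rcons.
  rewrite /path_cost -cats1 big_cat big_seq1 -/(path_cost ops q) e mulnDr.
  exact: leq_add c c1.
by case: hr => hr; [apply: (gen u v) | apply: (gen v u)]; rewrite ?eqxx ?orbT.
Qed.


Lemma good_E ops x U : valid_tower ops -> is_node ops x -> good ops x U ->
  (#|` U| <= size (E ops x))%N.
Proof.
move=> V /andP[xn _] g; apply: uniq_leq_size; first exact: fset_uniq.
move=> j jU; have [jx ij [w0 w0s [y0 [r0 a0]]] _] := g j jU.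
rewrite /E mem_filter mem_iota add0n (ltn_trans jx xn) andbT /in_E.
move: ij w0s r0; rewrite [st_at ops j.+1]/=; case: (nth dflt_op ops j) => [sg|] //= _ w0s r0.
rewrite andbT; apply/existsP; exists [` w0s]; rewrite /= r0.
exact: anc_subtree V xn a0.
Qed.

Lemma part1 ops : valid_tower ops -> forall p : seq nat, ascending ops p ->
     (path_cost ops p <= 2 * size (E ops (endpoint p)))%N.
Proof.
move=> V p /andP[/andP[p0 pn] ps].
have [U [c g]] := path_good V p0 pn ps.
apply: leq_trans c _; rewrite leq_mul2l /=.
apply: good_E V _ g.
case: p p0 pn {ps} => [//|a p'] _ pn.
by apply: (allP pn); rewrite /= mem_last.
Qed.


Lemma count_sum (T : Type) (a : pred T) (s : seq T) : count a s = (\sum_(x <- s) a x)%N.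
Proof. by elim: s => [|x s IH]; rewrite ?big_nil ?big_cons //= IH. Qed.

Lemma count_le1 (T : eqType) (s : seq T) (e : T -> nat) (a : pred T) :
  uniq (map e s) -> {in s &, forall p q, a p -> a q -> e p = e q} -> (count a s <= 1)%N.
Proof.
elim: s => [//|x s IH] /= /andP[xs us] h.
case ax: (a x) => /=; last first.
  by apply: IH => // p q ps qs; apply: h; rewrite inE ?ps ?qs orbT.
rewrite add1n ltnS leqn0 eqn0Ngt -has_count; apply/negP => /hasP [q qs aq].
have := h x q; rewrite !inE eqxx qs orbT => /(_ isT isT ax aq) exq.
by move: xs; rewrite exq map_f.
Qed.

Lemma anc_cmp ops a b y : anc ops a y -> anc ops b y -> anc ops a b \/ anc ops b a.
Proof.
elim=> [|y0 p e H IH] H2; first by right.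
case: H2 e => [|y1 p' e' H'] e; first by left; apply: anc_up e H.
by rewrite e in e'; case: e' => ep; rewrite -ep in H'; apply: IH.
Qed.

Lemma has_sum (T : Type) (f : T -> bool) (s : seq T) : has f s -> (1 <= \sum_(x <- s) f x)%N.
Proof.
elim: s => [//|x s IH]; rewrite big_cons /= => /orP[->//|/IH].
by move=> h; apply: leq_trans h (leq_addl _ _).
Qed.

Lemma sg_dim ops j sg : valid_tower ops -> j < size ops -> nth dflt_op ops j = Incl sg ->
  (#|` sg| <= (tower_dim ops).+1)%N.
Proof.
move=> V jn Ho.
have sK : sg \in Kc ops j.+1.
  have := i_img (tinv_all V jn) (ltnSn j); rewrite img_self Ho /=; apply; done.
have : (#|` sg| - 1 <= tower_dim ops)%N.
  have jl : j.+1 < (size ops).+1 by [].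
  have h := @leq_bigmax _ (fun i : 'I_(size ops).+1 => \max_(s <- Kc ops i) (#|` s| - 1))%N (Ordinal jl).
  apply: leq_trans h => /=.
  by apply: (@leq_bigmax_seq _ _ xpredT (fun s : {fset nat} => (#|` s| - 1)%N) sg).

by rewrite leq_subLR add1n.
Qed.

Lemma leq_sum_in (T : eqType) (s : seq T) (f g : T -> nat) :
  (forall x, x \in s -> f x <= g x)%N -> (\sum_(x <- s) f x <= \sum_(x <- s) g x)%N.
Proof.
elim: s => [|x s IH] h; rewrite ?big_nil ?big_cons //.
by apply: leq_add; [apply: h; rewrite inE eqxx | apply: IH => y ys; apply: h; rewrite inE ys orbT].
Qed.

Lemma asc_node ops p : ascending ops p -> is_node ops (endpoint p).
Proof.
case/andP=> /andP[p0 pn] _; case: p p0 pn => [//|a p'] _ pn.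
by apply: (allP pn); rewrite /endpoint /= mem_last.
Qed.

Lemma sum_inE_le ops P j : valid_tower ops -> independent ops P -> j < size ops ->
  (\sum_(p <- P) in_E ops (endpoint p) j <= is_incl (nth dflt_op ops j) * (tower_dim ops).+1)%N.
Proof.
move=> V /andP[/andP[asc ue] ind] jn.
rewrite /in_E; case Ho: (nth dflt_op ops j) => [sg|]; last by rewrite big1.
rewrite mul1n; apply: leq_trans (sg_dim V jn Ho).
set F := fun (p : seq nat) (w : nat) => match roots (st_at ops j.+1) w with
   Some y => in_subtree ops (endpoint p) y | None => false end.
apply: (@leq_trans (\sum_(p <- P) \sum_(w <- sg) (F p w : nat))).
  apply: leq_sum_in => p _.
  case: existsP => [[w hw]|_] //=; apply: has_sum; apply/hasP; exists (val w) => //.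
  exact: fsvalP.
rewrite exchange_big /= card_fset_sum1; apply: leq_sum_in => w _.
rewrite -count_sum; apply: (count_le1 (e := endpoint)) => // p q pP qP.
rewrite /F; case: (roots _ w) => // y hp hq.
have np := asc_node (allP asc p pP); have nq := asc_node (allP asc q qP).
have := ind; move/allP/(_ p pP)/allP/(_ q qP); rewrite negb_and negbK => hpq.
have := ind; move/allP/(_ q qP)/allP/(_ p pP); rewrite negb_and negbK => hqp.
case: (anc_cmp (subtree_anc hp) (subtree_anc hq)) => h.
  case/orP: hpq => [/eqP //|]; by rewrite (anc_subtree V (proj1 (andP np)) h).
case/orP: hqp => [/eqP -> //|]; by rewrite (anc_subtree V (proj1 (andP nq)) h).
Qed.

Lemma part2 ops : valid_tower ops -> forall P : seq (seq nat), independent ops P ->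
     (set_cost ops P <= 2 * (tower_dim ops).+1 * n_incl ops)%N.
Proof.
move=> V P indP; have asc : all (ascending ops) P by case/andP: indP => /andP[].
apply: (@leq_trans (\sum_(p <- P) 2 * size (E ops (endpoint p)))).
  by apply: leq_sum_in => p pP; apply: part1 V _ (allP asc p pP).
rewrite -big_distrr -mulnA leq_mul2l /=.
have e1 : forall x, size (E ops x) = (\sum_(j <- iota 0 (size ops)) in_E ops x j)%N.
  by move=> x; rewrite /E size_filter count_sum.
under eq_bigr do rewrite e1.
rewrite exchange_big /=.
apply: (@leq_trans (\sum_(j <- iota 0 (size ops)) is_incl (nth dflt_op ops j) * (tower_dim ops).+1)).
  apply: leq_sum_in => j; rewrite mem_iota add0n => /andP[_ jn].
  exact: sum_inE_le.
rewrite -big_distrl /= mulnC leq_mul2l; apply/orP; right.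
rewrite /n_incl.
have -> : count is_incl ops = count is_incl (mkseq (nth dflt_op ops) (size ops)) by rewrite mkseq_nth.
by rewrite /mkseq count_map count_sum.
Qed.

Theorem lemma9' (ops : seq op) :
  valid_tower ops ->
  (forall p : seq nat, ascending ops p ->
     path_cost ops p <= 2 * size (E ops (endpoint p))) /\
  (forall P : seq (seq nat), independent ops P ->
     set_cost ops P <= 2 * (tower_dim ops).+1 * n_incl ops).
Proof. by move=> V; split; [apply: part1 | apply: part2]. Qed.


Local Close Scope fset_scope.
Unset Implicit Arguments.

Theorem lemma9 (ops : seq op) :
  valid_tower ops ->
  (forall p : seq nat, ascending ops p ->
     path_cost ops p <= 2 * size (E ops (endpoint p))) /\
  (forall P : seq (seq nat), independent ops P ->
     set_cost ops P <= 2 * (tower_dim ops).+1 * n_incl ops).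
Proof. exact: lemma9'. Qed.
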